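(* Let $d\geq 2$ and $U=(u_{ij})_{i,j=1}^d\in\mathcal{U}_d(\mathbb{C})$. The following two conditions are equivalent: (H1) there exist $M\in\mathbb{N}$ and $D_1,\dots,D_{2M}\in\mathcal{DU}_d(\mathbb{C})$ such that $D_1U^\dagger D_2UD_3U^\dagger D_4U\cdots D_{2M-1}U^\dagger D_{2M}U$ is a matrix with all entries non-zero; (H2) there exists $M\in\mathbb{N}$ such that $(P_U^TP_U)^M$ is a matrix with all entries non-zero.
   Context: $\mathcal{U}_d(\mathbb{C})$ denotes the group of $d\times d$ unitary matrices and $\mathcal{DU}_d(\mathbb{C})$ its subgroup of diagonal unitary matrices $\sum_i u_{ii}|i\rangle\langle i|$ with $|u_{ii}|=1$. $P_U=(p_{ij})$ is the $0/1$ matrix with $p_{ij}=0$ if $u_{ij}=0$ and $p_{ij}=1$ if $u_{ij}\neq 0$. *)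

(* Defs.v *)
From HB Require Import structures.
From mathcomp Require Import all_boot all_order all_algebra.
From mathcomp Require Import reals.
From mathcomp.real_closed Require Import complex.
Set Implicit Arguments. Unset Strict Implicit. Unset Printing Implicit Defensive.
Import Order.TTheory GRing.Theory Num.Theory.
Local Open Scope ring_scope.
Local Open Scope complex_scope.

Section Defs.
Variable R : realType.

Definition adjmx (d : nat) (A : 'M[R[i]]_d) : 'M[R[i]]_d :=
  \matrix_(k, l) (A l k)^*.

Definition unitary (d : nat) (U : 'M[R[i]]_d) : Prop :=
  U *m adjmx U = 1%:M /\ adjmx U *m U = 1%:M.

Definition diag_unitary (d : nat) (D : 'M[R[i]]_d) : Prop :=
  (forall k l : 'I_d, k != l -> D k l = 0) /\ (forall k : 'I_d, `|D k k| = 1).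

(* D_1 U^+ D_2 U D_3 U^+ D_4 U ... D_{2M-1} U^+ D_{2M} U,
   with D_{j+1} written D j (0-based indexing). *)
Fixpoint alt_prod (d : nat) (D : nat -> 'M[R[i]]_d) (U : 'M[R[i]]_d) (M : nat)
  : 'M[R[i]]_d :=
  match M with
  | 0 => 1%:M
  | M'.+1 => alt_prod D U M' *m (D (2 * M')%N *m adjmx U *m D (2 * M').+1 *m U)
  end.
End Defs.

Definition patmx (R : realType) (d : nat) (U : 'M[R[i]]_d) : 'M[nat]_d :=
  \matrix_(k, l) (if U k l == 0 then 0%N else 1%N).

Definition mxpown (d : nat) (A : 'M[nat]_d) (M : nat) : 'M[nat]_d :=
  iter M (mulmx A) 1%:M.

Definition all_entries_nonzero (T : nmodType) (d : nat) (A : 'M[T]_d) : Prop :=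
  forall k l : 'I_d, A k l != 0.

(* Main.v *)
Require Import Defs.
From HB Require Import structures.
From mathcomp Require Import all_boot all_order all_algebra.
From mathcomp Require Import reals.
From mathcomp.real_closed Require Import complex.
From mathcomp Require Import ring lra zify.
Import Order.TTheory GRing.Theory Num.Theory.
Local Open Scope ring_scope.

Lemma mulmx_neq0 (T : pzSemiRingType) (d : nat) (A B : 'M[T]_d) i j :
  (A *m B) i j != 0 -> exists k, A i k != 0 /\ B k j != 0.
Proof.
move=> h.
have [k hk] : exists k, A i k * B k j != 0.
  apply/existsP; apply: contraNT h => /existsPn hall.
  rewrite mxE big1 // => k _; apply/eqP; move: (hall k); by rewrite negbK.
exists k; split; apply: contraNneq hk => ->; by rewrite ?mul0r ?mulr0.
Qed.

Lemma natsum_neq0 (d : nat) (F : 'I_d -> nat) k0 : F k0 != 0 -> \sum_(k < d) F k != 0.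
Proof.
move=> h; rewrite (bigD1 k0) //=.
by rewrite -[_ + _]/(addn _ _) addn_eq0 negb_and h.
Qed.

Lemma natmul_neq0 (a b : nat) : a != 0 -> b != 0 -> a * b != 0.
Proof. by rewrite -[a * b]/(muln _ _) muln_eq0 => /negPf -> /negPf ->. Qed.

Lemma natmx_neq0 (d : nat) (A B : 'M[nat]_d) i k j :
  A i k != 0 -> B k j != 0 -> (A *m B) i j != 0.
Proof. move=> h1 h2; rewrite mxE; apply: (@natsum_neq0 _ _ k); exact: natmul_neq0. Qed.

Lemma mxpownS (d : nat) (Q : 'M[nat]_d) M : mxpown Q M.+1 = mxpown Q M *m Q.
Proof.
rewrite /mxpown; elim: M => [|M IH]; first by rewrite /= mulmx1 mul1mx.
by rewrite [LHS]iterS IH mulmxA -IH.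
Qed.


Section Main.
Variable R : realType.
Variable d : nat.
Variable U : 'M[R[i]]_d.
Local Notation Q := ((patmx U)^T *m patmx U).

Lemma diag_neq0 (D : 'M[R[i]]_d) k l : diag_unitary D -> D k l != 0 -> k = l.
Proof. by move=> [hD _] h; case: (eqVneq k l) => // hkl; rewrite (hD _ _ hkl) eqxx in h. Qed.


Lemma Q_neq0 k b : Q k b != 0 -> exists l, U l k != 0 /\ U l b != 0.
Proof.
move=> /mulmx_neq0 [l []]; rewrite /patmx !mxE.
by case: (U l k =P 0) => // h1 _; case: (U l b =P 0) => // h2 _; exists l; split; apply/eqP.
Qed.

Lemma Q_neq0' k b l : U l k != 0 -> U l b != 0 -> Q k b != 0.
Proof.
move=> h1 h2; apply: (@natmx_neq0 _ _ _ _ l _); rewrite /patmx !mxE.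
  by rewrite (negPf h1).
by rewrite (negPf h2).
Qed.

Lemma supp1 (D : nat -> 'M[R[i]]_d) M :
  (forall j, (j < 2 * M)%N -> diag_unitary (D j)) ->
  forall a b, alt_prod D U M a b != 0 -> mxpown Q M a b != 0.
Proof.
elim: M => [|M IH] hD a b.
  rewrite !mxE; case: (a =P b) => //= _; by rewrite ?eqxx.
move=> /mulmx_neq0 [k [hA hS]].
rewrite mxpownS; apply: (@natmx_neq0 _ _ _ _ k).
  apply: IH hA => j hj; apply: hD; lia.
move: hS => /mulmx_neq0 [m [h1 hU2]].
move: h1 => /mulmx_neq0 [m' [h1 hD1]].
have em : m' = m by apply: (@diag_neq0 _ _ _ (hD (2*M).+1 _) hD1); lia.
subst m'.
move: h1 => /mulmx_neq0 [k' [hD0 hU1]].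
have ek : k = k' by apply: (@diag_neq0 _ _ _ (hD (2*M) _) hD0); lia.
subst k'.
move: hU1; rewrite /adjmx mxE conjc_eq0 => hU1.
exact: (@Q_neq0' _ _ _ hU1 hU2).
Qed.
End Main.

Local Open Scope complex_scope.
Section Unimod.
Variable R : realType.
Definition xc (t : nat) : R[i] := (1 +i* t%:R).
Definition wc (t : nat) : R[i] := xc t / (xc t)^*.

Lemma xc_neq0 t : xc t != 0.
Proof. by rewrite eq_complex /= oner_eq0. Qed.
Lemma xcJ_neq0 t : (xc t)^* != 0.
Proof. by rewrite conjc_eq0 xc_neq0. Qed.

Lemma wc_norm t : `|wc t| = 1.
Proof. by rewrite /wc normf_div normcJ divff // normr_eq0 xc_neq0. Qed.

Lemma wc_inj : injective wc.
Proof.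
move=> s t /eqP; rewrite /wc eqr_div ?xc_neq0 ?xcJ_neq0 // /xc.
simpc. rewrite eq_complex /= => /andP[_ /eqP h].
apply/eqP; rewrite -(eqr_nat R); apply/eqP. lra.
Qed.

Lemma avoid_root (P : {poly R[i]}) : P != 0 -> exists w : R[i], `|w| = 1 /\ ~~ root P w.
Proof.
move=> P0.
have: ~~ all (root P) (map wc (iota 0 (size P))).
  apply/negP => hall.
  have := max_poly_roots P0 hall.
  rewrite map_inj_uniq ?iota_uniq; last exact: wc_inj.
  by rewrite size_map size_iota ltnn => /(_ isT).
case/allPn => w /mapP [t _ ->] hr.
by exists (wc t); split => //; apply: wc_norm.
Qed.

Lemma choose_lin (d : nat) (I : finType) (v : I -> 'I_d -> R[i]) :
  exists w : R[i], `|w| = 1 /\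
    forall i, (exists l, v i l != 0) -> \sum_(l < d) v i l * w ^+ l != 0.
Proof.
pose vn i (l : nat) := oapp (v i) 0 (insub l : option 'I_d).
pose p i := \poly_(l < d) vn i l.
have hp i : (exists l, v i l != 0) -> p i != 0.
  move=> [l hl]; apply: contraNneq hl => h.
  have := congr1 (fun q : {poly R[i]} => q`_l) h.
  by rewrite /= coef_poly ltn_ord coef0 /vn valK /= => ->.
pose P := \prod_(i | p i != 0) p i.
have P0 : P != 0 by apply/prodf_neq0 => i.
have [w [hw hr]] := @avoid_root P P0.
exists w; split => // i hi.
have hpi := hp i hi.
have : (p i).[w] != 0.
  apply: contra hr => h; rewrite /root horner_prod; apply/prodf_eq0; by exists i.
rewrite horner_poly.
rewrite (eq_bigr (fun l : 'I_d => v i l * w ^+ l)) // => l _.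
by rewrite /vn valK.
Qed.
End Unimod.

Section Main2.
Variable R : realType.
Variable d : nat.
Variable U : 'M[R[i]]_d.
Local Notation Q := ((patmx U)^T *m patmx U).

Lemma alt_prod_ext (D D' : nat -> 'M[R[i]]_d) M :
  (forall j, (j < 2 * M)%N -> D j = D' j) -> alt_prod D U M = alt_prod D' U M.
Proof.
elim: M => [|M IH] h //=.
rewrite IH; last by move=> j hj; apply: h; lia.
rewrite (h (2*M)%N); last lia.
rewrite (h (2*M).+1) //; lia.
Qed.

Lemma diag_row_unitary (w : R[i]) : `|w| = 1 -> diag_unitary (diag_mx (\row_(k < d) w ^+ k)).
Proof.
move=> hw; split => [k l hkl|k]; rewrite !mxE ?(negPf hkl) ?mulr0n //.
by rewrite eqxx mulr1n normrX hw expr1n.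
Qed.

Lemma supp2 M : exists D : nat -> 'M[R[i]]_d, (forall j, diag_unitary (D j)) /\
  forall a b, mxpown Q M a b != 0 -> alt_prod D U M a b != 0.
Proof.
elim: M => [|M [D [hD hS]]].
  exists (fun _ => 1%:M); split.
    move=> j; split => [k l hkl|k]; rewrite mxE ?(negPf hkl) //= ?normr1 //.
    by rewrite eqxx /= normr1.
  move=> a b; rewrite /= !mxE; case: (a =P b) => // _ _; exact: oner_neq0.
set A := alt_prod D U M.
have [w2 [hw2 hg]] := @choose_lin R d ('I_d * 'I_d)%type (fun p l => (U l p.1)^* * U l p.2).
pose g k b := \sum_(l < d) (U l k)^* * U l b * w2 ^+ l.
have [w1 [hw1 hf]] := @choose_lin R d ('I_d * 'I_d)%type (fun p k => A p.1 k * g k p.2).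
pose Dx := diag_mx (\row_(k < d) w1 ^+ k).
pose Dy := diag_mx (\row_(l < d) w2 ^+ l).
pose D' := fun j => if j == (2*M)%N then Dx else if j == (2*M).+1 then Dy else D j.
exists D'; split.
  move=> j; rewrite /D'; case: ifP => _; first exact: diag_row_unitary.
  by case: ifP => _; [exact: diag_row_unitary| exact: hD].
move=> a b; rewrite mxpownS => /mulmx_neq0 [k [hQM hQ]].
have [l [hl1 hl2]] := @Q_neq0 R d U _ _ hQ.
have hA : A a k != 0 := hS a k hQM.
have hgk : g k b != 0.
  apply: (hg (k, b)); exists l => /=; by rewrite mulf_neq0 ?conjc_eq0.
have hfin := hf (a, b) (ex_intro _ k (mulf_neq0 hA hgk)).
have e1 : alt_prod D' U M = A.
  symmetry; apply: alt_prod_ext => j hj; rewrite /D' ifN; last by apply/eqP; lia.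
  rewrite ifN //; apply/eqP; lia.
have e2 : alt_prod D' U M.+1 = A *m (Dx *m adjmx U *m Dy *m U).
  rewrite /= e1 /D' eqxx ifN ?eqxx //; apply/eqP; lia.
have hS' : forall k, (Dx *m adjmx U *m Dy *m U) k b = g k b * w1 ^+ k.
  move=> k'; rewrite /Dx /Dy mul_diag_mx mul_mx_diag mxE /g mulr_suml.
  apply: eq_bigr => l' _; rewrite /adjmx !mxE; ring.
rewrite e2 mxE; move: hfin => /=.
move=> hf'; rewrite (eq_bigr (fun j => A a j * g j b * w1 ^+ j)) // => j _.
by rewrite -mulrA; congr (_ * _); exact: hS'.
Qed.
End Main2.

Local Close Scope complex_scope.

Theorem proposition8 (R : realType) (d : nat) (hd : (2 <= d)%N)
  (U : 'M[R[i]]_d) (hU : unitary U) :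
  (exists (M : nat) (D : nat -> 'M[R[i]]_d),
      (forall j, (j < 2 * M)%N -> diag_unitary (D j)) /\
      all_entries_nonzero (alt_prod D U M))
  <->
  (exists M : nat, all_entries_nonzero (mxpown ((patmx U)^T *m patmx U) M)).
Proof.
split.
  move=> [M [D [hD hA]]]; exists M => a b.
  exact: (@supp1 R d U D M hD a b (hA a b)).
move=> [M hM]; have [D [hD hS]] := @supp2 R d U M.
exists M, D; split => [j _|a b]; [exact: hD | exact: hS a b (hM a b)].
Qed.
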